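(* There exist constants $c_0 \geq c_1 > 0$ such that for all sufficiently large $N$ there is a non-feasible pair $(N,M)$ for the family of line graphs of acyclic graphs, and the smallest such $M$ satisfies \[\frac{N^2}{2} - c_0N\sqrt{N} \leq M \leq \frac{N^2}{2} - c_1N\sqrt{N}.\]
   Context: All graphs are finite and simple; $L(G)$ denotes the line graph of $G$. For integers $N \ge 1$ and $0\le M\le\binom{N}{2}$, the pair $(N,M)$ is feasible for the family of line graphs of acyclic graphs if there is an acyclic graph (forest) $F$ such that $L(F)$ has exactly $N$ vertices (i.e. $F$ has $N$ edges) and exactly $M$ edges; otherwise it is non-feasible. *)

(* Defs.v *)
From mathcomp Require Import all_boot.
Set Implicit Arguments. Unset Strict Implicit. Unset Printing Implicit Defensive.

Definition simple_edges (n : nat) (E : {set {set 'I_n}}) : Prop :=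
  forall e, e \in E -> #|e| = 2.

Definition adj (n : nat) (E : {set {set 'I_n}}) : rel 'I_n :=
  fun x y => [set x; y] \in E.

Definition acyclic (n : nat) (E : {set {set 'I_n}}) : Prop :=
  forall c : seq 'I_n, 3 <= size c -> ~ ucycle (adj E) c.

Definition line_graph_edges (n : nat) (E : {set {set 'I_n}}) : nat :=
  #|[set P : {set {set 'I_n}} |
      (P \subset E) && (#|P| == 2) &&
      [exists e in P, exists f in P, (e != f) && ~~ [disjoint e & f]]]|.

Definition feasible (N M : nat) : Prop :=
  exists (n : nat) (E : {set {set 'I_n}}),
    [/\ simple_edges E, acyclic E, #|E| = N & line_graph_edges E = M].

Definition non_feasible (N M : nat) : Prop :=
  M <= 'C(N, 2) /\ ~ feasible N M.

(* Main.v *)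
Require Import Defs.
From mathcomp Require Import all_boot.
From Stdlib Require Import Reals.
From mathcomp Require Import zify.
From Stdlib Require Import Lra Psatz.
Set Implicit Arguments. Unset Strict Implicit. Unset Printing Implicit Defensive.

Lemma bin2_mul2 n : 'C(n, 2) * 2 = n * n.-1.
Proof.
elim: n => [|n IH] //. rewrite binS bin1 mulnDl IH. case: n {IH} => //= n. lia.
Qed.

Lemma two_eq (T : finType) (e : {set T}) u w : #|e| = 2 -> u != w -> u \in e -> w \in e -> e = [set u; w].
Proof.
move=> he uw ue we. apply/esym/eqP; rewrite eqEcard cards2 uw he andbT.
by apply/subsetP => x; rewrite !inE => /orP [] /eqP ->.
Qed.

Section Gen.
Variable T : finType.
Variable E : {set {set T}}.
Hypothesis simp : forall e, e \in E -> #|e| = 2.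

Definition star (v : T) := [set e in E | v \in e].
Definition pairs := [set P : {set {set T}} |
      (P \subset E) && (#|P| == 2) &&
      [exists e in P, exists f in P, (e != f) && ~~ [disjoint e & f]]].

Lemma two_common e f u w : e \in E -> f \in E -> u != w -> u \in e -> w \in e -> u \in f -> w \in f -> e = f.
Proof.
move=> eE fE uw ue we uf wf.
by rewrite (two_eq (simp eE) uw ue we) (two_eq (simp fE) uw uf wf).
Qed.

Lemma pairs_common P : P \in pairs -> #|[set v | P \subset star v]| = 1.
Proof.
rewrite inE => /andP [/andP [PE /eqP P2]] /existsP [e /andP [eP /existsP [f /andP [fP /andP [ef dj]]]]].
have eE : e \in E by apply: (subsetP PE).
have fE : f \in E by apply: (subsetP PE).
have Pef : P = [set e; f] by apply: two_eq.
have -> : [set v | P \subset star v] = e :&: f.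
  apply/setP => v; rewrite !inE Pef; apply/subsetP/andP.
  - by move=> H; split; [have := H e | have := H f]; rewrite !inE eqxx ?orbT => /(_ isT) => /andP [].
  - by case=> ve vf x; rewrite !inE => /orP [] /eqP ->; rewrite ?eE ?fE.
apply/eqP; rewrite eqn_leq; apply/andP; split.
- apply/card_le1P => u; rewrite inE => /andP [ue uf] w; rewrite !inE.
  apply/andP/eqP.
  + case=> we wf; apply/eqP; apply: contraNT ef => uw; apply/eqP.
    by apply: (@two_common e f w u) => //; rewrite eq_sym.
  + by move->.
- by rewrite card_gt0 setI_eq0.
Qed.

Lemma pairs_sub2 v (P : {set {set T}}) : P \subset star v -> #|P| = 2 -> P \in pairs.
Proof.
move=> Ps P2; have /cards2P [e [f [ef Pef]]] : #|P| == 2 by rewrite P2.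
have : e \in star v by apply: (subsetP Ps); rewrite Pef !inE eqxx.
have : f \in star v by apply: (subsetP Ps); rewrite Pef !inE eqxx orbT.
rewrite !inE => /andP [fE vf] /andP [eE ve].
rewrite P2 eqxx andbT; apply/andP; split.
  by apply/subsetP => x; rewrite Pef !inE => /orP [] /eqP ->.
apply/existsP; exists e; rewrite Pef !inE eqxx /=; apply/existsP; exists f.
rewrite !inE eqxx orbT ef /=; rewrite -setI_eq0; apply/set0Pn; exists v.
by rewrite inE ve vf.
Qed.

Lemma lge_formula : #|pairs| = \sum_v 'C(#|star v|, 2).
Proof.
rewrite -sum1_card.
transitivity (\sum_(P in pairs) \sum_(v | P \subset star v) 1).
  by apply: eq_bigr => P HP; rewrite sum_nat_cond_const pairs_common.
rewrite (exchange_big_dep predT) //=.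
apply: eq_bigr => v _; rewrite -cards_draws sum_nat_cond_const muln1.
apply: eq_card => P; rewrite !inE; apply/andP/andP.
  by case=> /[swap] -> Pin; move: Pin => /andP [/andP [_ ->]].
by case=> Ps /eqP P2; split => //; have := pairs_sub2 Ps P2; rewrite inE.
Qed.

Lemma handshake : \sum_v #|star v| = #|E| * 2.
Proof.
transitivity (\sum_v \sum_(e in E | v \in e) 1).
  by apply: eq_bigr => v _; rewrite sum_nat_cond_const muln1; apply: eq_card => e; rewrite !inE.
rewrite (exchange_big_dep (mem E)) //=.
rewrite (eq_bigr (fun _ => 2)) ?sum_nat_const // => e eE.
rewrite sum_nat_cond_const muln1 -(simp eE).
  by apply: eq_card => x; rewrite !inE eE.
by move=> v e _ /andP [].
Qed.

Lemma lge_lower v : 'C(#|star v|, 2) <= #|pairs|.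
Proof. by rewrite lge_formula (bigD1 v) //= leq_addr. Qed.

Lemma lge_crude D : (forall u, #|star u| <= D) -> #|pairs| <= #|E| * D.-1.
Proof.
move=> HD; rewrite -(leq_pmul2r (isT : 0 < 2)) lge_formula big_distrl /=.
apply: (@leq_trans (\sum_v #|star v| * D.-1)).
  apply: leq_sum => u _; rewrite bin2_mul2 leq_mul2l; apply/orP; right.
  by rewrite -!subn1 leq_sub2r.
by rewrite -big_distrl /= handshake mulnAC.
Qed.

Hypothesis trifree : forall a b c, a != b -> b != c -> a != c ->
  [set a; b] \in E -> [set b; c] \in E -> [set a; c] \in E -> False.

Lemma tri_aux e e' f v a b : e \in E -> e' \in E -> f \in E ->
  v \in e -> v \in e' -> v \notin f -> a \in e -> a \in f -> b \in e' -> b \in f -> e = e'.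
Proof.
move=> eE e'E fE ve ve' vf ae af be' bf.
have va : v != a by apply: contraNneq vf => ->.
have vb : v != b by apply: contraNneq vf => ->.
have [ab|ab] := eqVneq a b.
  by subst b; apply: (@two_common e e' v a).
exfalso; apply: (@trifree v a b) => //.
- by rewrite -(two_eq (simp eE) va ve ae).
- by rewrite -(two_eq (simp fE) ab af bf).
- by rewrite -(two_eq (simp e'E) vb ve' be').
Qed.

Lemma cardsU_le (U : finType) (A B : {set U}) : #|A :|: B| <= #|A| + #|B|.
Proof. by rewrite cardsU leq_subr. Qed.

Lemma lge_tri v : #|pairs| <= 'C(#|star v|, 2) + 'C(#|E| - #|star v|, 2) + (#|E| - #|star v|).
Proof.
set S := star v; set E' := E :\: S.
have SE : S \subset E by apply/subsetP => e; rewrite inE => /andP [].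
have cE' : #|E'| = #|E| - #|S| by rewrite cardsD (setIidPr SE).
pose g (f : {set T}) := odflt f [pick e in S | ~~ [disjoint e & f]].
pose D2 (X : {set {set T}}) := [set A : {set {set T}} | A \subset X & #|A| == 2].
have key : pairs \subset D2 S :|: D2 E' :|: [set [set g f; f] | f in E'].
  apply/subsetP => P; rewrite inE => /andP [/andP [PE /eqP P2]] /existsP [e /andP [eP /existsP [f /andP [fP /andP [ef dj]]]]].
  have Pef : P = [set e; f] by apply: two_eq.
  have eE : e \in E by apply: (subsetP PE).
  have fE : f \in E by apply: (subsetP PE).
  have cross : forall e f, e \in E -> f \in E -> e \in S -> f \notin S -> ~~ [disjoint e & f] -> g f = e.
    move=> e1 f1 e1E f1E e1S f1S dj1; rewrite /g; case: pickP => [e2 /andP [e2S dj2]|H]; last first.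
      by have := H e1; rewrite e1S dj1.
    move: e1S e2S f1S; rewrite !inE e1E f1E /= => ve1 /andP [e2E ve2] vf1.
    move: dj1 dj2; rewrite -!setI_eq0 => /set0Pn [a]; rewrite inE => /andP [ae af].
    move=> /set0Pn [b]; rewrite inE => /andP [be bf].
    by apply/esym; apply: (@tri_aux e1 e2 f1 v a b).
  have [eS|eS] := boolP (e \in S); have [fS|fS] := boolP (f \in S).
  - rewrite !inE; apply/orP; left; apply/orP; left; rewrite P2 eqxx andbT.
    by apply/subsetP => x; rewrite Pef => /set2P [] ->.
  - rewrite !inE; apply/orP; right; apply/imsetP; exists f; first by rewrite inE fS fE.
    by rewrite Pef (cross e f).
  - rewrite !inE; apply/orP; right; apply/imsetP; exists e; first by rewrite inE eS eE.
    by rewrite Pef setUC (cross f e) // disjoint_sym.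
  - rewrite !inE; apply/orP; left; apply/orP; right; rewrite P2 eqxx andbT.
    by apply/subsetP => x; rewrite Pef => /set2P [] ->; rewrite inE ?eE ?fE ?eS ?fS.
apply: (leq_trans (subset_leq_card key)).
apply: (leq_trans (cardsU_le _ _)); rewrite -cE'.
apply: leq_add; last exact: leq_imset_card.
apply: (leq_trans (cardsU_le _ _)); by rewrite /D2 !cards_draws.
Qed.
End Gen.

Definition gadj (T : finType) (E : {set {set T}}) : rel T := fun x y => [set x; y] \in E.
Definition gacyclic (T : finType) (E : {set {set T}}) : Prop :=
  forall c : seq T, 3 <= size c -> ~ ucycle (gadj E) c.

Lemma acyc_tri (T : finType) (E : {set {set T}}) : gacyclic E ->
  forall a b c, a != b -> b != c -> a != c ->
  [set a; b] \in E -> [set b; c] \in E -> [set a; c] \in E -> False.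
Proof.
move=> H a b c ab bc ac Eab Ebc Eac; apply: (H [:: a; b; c]) => //.
by rewrite /ucycle /= /gadj Eab Ebc setUC Eac /= !inE negb_or ab ac bc.
Qed.

Section Forest.
Variable T : finType.
Variable p : T -> T.
Hypothesis hp : forall x, p (p x) = p x.

Definition L := [set x | p x != x].
Definition SE := [set [set x; p x] | x in L].
Definition fib c := [set x | (p x == c) && (x != c)].

Lemma SE_simple e : e \in SE -> #|e| = 2.
Proof. by case/imsetP => x; rewrite inE => xL ->; rewrite cards2 eq_sym xL. Qed.

Lemma fixL x : p x \notin L.
Proof. by rewrite inE hp eqxx. Qed.

Lemma SE_adj a b : [set a; b] \in SE -> (a \in L /\ b = p a) \/ (b \in L /\ a = p b).
Proof.
case/imsetP => x xL Hab.
have ax : a \in [set x; p x] by rewrite -Hab !inE eqxx.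
have bx : b \in [set x; p x] by rewrite -Hab !inE eqxx orbT.
have px : p x \in [set a; b] by rewrite Hab !inE eqxx orbT.
have xx : x \in [set a; b] by rewrite Hab !inE eqxx.
move: ax bx px xx => /set2P [] -> /set2P [] ->.
- by move=> /set2P [] /esym H; move: xL; rewrite inE -H eqxx.
- by move=> _ _; left.
- by move=> _ _; right.
- by move=> _ /set2P [] H; move: xL; rewrite inE -H eqxx.
Qed.

Lemma SE_card : #|SE| = #|L|.
Proof.
apply: card_in_imset => x y xL yL H.
have : x \in [set y; p y] by rewrite -H !inE eqxx.
case/set2P => // xy; move: xL; rewrite inE xy hp eqxx //.
Qed.

Lemma SE_mid x y z r : ucycle (gadj SE) [:: x, y, z & r] -> y \notin L.
Proof.
case/andP => /= /andP [axy /andP [ayz _]] /andP [xn _].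
have xz : x != z by apply: contra xn => /eqP ->; rewrite !inE eqxx orbT.
apply/negP => yL.
have xy : x = p y.
  case: (SE_adj axy) => [[_ E1]|[_ //]]; by move: yL; rewrite E1 (negbTE (fixL _)).
have zy : z = p y.
  case: (SE_adj ayz) => [[_ //]|[_ E1]]; by move: yL; rewrite E1 (negbTE (fixL _)).
by move: xz; rewrite zy xy eqxx.
Qed.


Lemma SE_acyclic : gacyclic SE.
Proof.
move=> c; case: c => [|x [|y [|z r]]] hs; try (exfalso; move: hs; by []).
move=> uc.
have yL := SE_mid uc.
have zL : z \notin L.
  have : ucycle (gadj SE) (rot 1 [:: x, y, z & r]) by rewrite rot_ucycle.
  rewrite rot1_cons /=; case: r {uc hs} => [|w r] uc; exact: SE_mid uc.
case/andP: uc => /= /andP [_ /andP [ayz _]] _.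
by case: (SE_adj ayz) => [[H _]|[H _]]; [move: yL | move: zL]; rewrite H.
Qed.

Lemma star_fib v : 'C(#|star SE v|, 2) = 'C(#|fib v|, 2).
Proof.
have [vfix|vL] := eqVneq (p v) v.
  have -> : star SE v = [set [set x; v] | x in fib v].
    apply/setP => e; rewrite !inE; apply/andP/imsetP.
    - case=> /imsetP [x xL ->] /set2P [] vx.
        by move: xL; rewrite inE -vx vfix eqxx.
      exists x; last by rewrite vx.
      by rewrite inE vx eqxx /=; move: xL; rewrite inE eq_sym.
    - case=> x; rewrite inE => /andP [/eqP pxv xv] ->; split; last by rewrite !inE eqxx orbT.
      by rewrite -pxv; apply: imset_f; rewrite inE pxv eq_sym.
  congr 'C(_, 2); apply: card_in_imset => x y; rewrite !inE => /andP [_ xv] /andP [_ yv] H.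
  have : x \in [set y; v] by rewrite -H !inE eqxx.
  by case/set2P => // xv'; move: xv; rewrite xv' eqxx.
have -> : fib v = set0.
  apply/setP => x; rewrite !inE; apply/negP => /andP [/eqP pxv _].
  by move: vL; rewrite -pxv hp eqxx.
rewrite cards0 bin_small //; apply: (@leq_ltn_trans #|[set [set v; p v]]|); last by rewrite cards1.
apply: subset_leq_card; apply/subsetP => e; rewrite !inE => /andP [/imsetP [x xL ->]] /set2P [] vx.
  by rewrite vx.
by move: vL; rewrite vx hp eqxx.
Qed.

Lemma L_fib : #|L| = \sum_v #|fib v|.
Proof.
rewrite -sum1_card (partition_big p predT) //=; apply: eq_bigr => v _.
rewrite sum_nat_cond_const muln1; apply: eq_card => x; rewrite !inE.
apply/andP/andP => [[xL /eqP pxv]|[/eqP pxv xv]]; split => //.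
- by rewrite pxv.
- by apply: contraNneq xL => xv; rewrite pxv xv.
- by rewrite pxv eq_sym.
- by rewrite pxv.
Qed.

Lemma SE_lge : #|pairs SE| = \sum_v 'C(#|fib v|, 2).
Proof. rewrite lge_formula; [by apply: eq_bigr => v _; apply: star_fib | exact: SE_simple]. Qed.
End Forest.

Section Transfer.
Variable T : finType.
Variable p : T -> T.
Hypothesis hp : forall x, p (p x) = p x.

Definition pI (x : 'I_#|T|) : 'I_#|T| := enum_rank (p (enum_val x)).

Lemma pI_idem x : pI (pI x) = pI x.
Proof. by rewrite /pI enum_rankK hp. Qed.

Lemma card_pre (P : pred T) : #|[set x : 'I_#|T| | P (enum_val x)]| = #|[set y | P y]|.
Proof.
rewrite -(card_imset _ (@enum_val_inj _ _)); apply: eq_card => y.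
rewrite [in RHS]inE; apply/imsetP/idP => [[x]|Py]; first by rewrite !inE => Px ->.
by exists (enum_rank y); rewrite ?inE enum_rankK.
Qed.

Lemma fib_pI c : #|fib pI c| = #|fib p (enum_val c)|.
Proof.
rewrite /fib -card_pre; apply: eq_card => x; rewrite !inE /pI.
by rewrite -(inj_eq (@enum_val_inj _ _)) enum_rankK (inj_eq (@enum_val_inj _ _)).
Qed.

Lemma sum_pI (F : nat -> nat) : \sum_(c : 'I_#|T|) F #|fib pI c| = \sum_(c : T) F #|fib p c|.
Proof.
rewrite [RHS](reindex (fun x : 'I_#|T| => enum_val x)) /=; last by exists enum_rank => y _; [apply: enum_valK | apply: enum_rankK].
by apply: eq_bigr => c _; rewrite fib_pI.
Qed.
End Transfer.

Lemma forest_feasible (T : finType) (p : T -> T) : (forall x, p (p x) = p x) ->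
  feasible (\sum_c #|fib p c|) (\sum_c 'C(#|fib p c|, 2)).
Proof.
move=> hp; have hpI := pI_idem hp.
exists #|T|, (SE (pI p)); split.
- move=> e; exact: SE_simple.
- exact: SE_acyclic.
- by rewrite SE_card // L_fib // (sum_pI p (fun n => n)).
- by rewrite /line_graph_edges -/(pairs _) SE_lge // (sum_pI p (fun n => 'C(n, 2))).
Qed.

Lemma card_ord_lt K a : a <= K -> #|[set j : 'I_K | j < a]| = a.
Proof.
move=> aK.
have inj : injective (fun j : 'I_a => widen_ord aK j).
  by move=> x y /(congr1 val) /= /val_inj.
rewrite -[a in RHS]card_ord -(card_imset _ inj); apply: eq_card => j.
rewrite !inE; apply/idP/imsetP => [ja|[x _ ->]] //=.
by exists (Ordinal ja) => //; apply: val_inj.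
Qed.

Lemma nth_le_sumn (l : seq nat) i : nth 0 l i <= sumn l.
Proof. elim: l i => [|a l IH] [|i] //=; [lia | have := IH i; lia]. Qed.

Section ListForest.
Variable l : seq nat.
Definition T0 := ('I_(size l) * option 'I_(sumn l))%type.
Definition p0 (v : T0) : T0 :=
  match v with
  | (i, Some j) => if j < nth 0 l i then (i, None) else v
  | (i, None) => v
  end.

Lemma p0_idem v : p0 (p0 v) = p0 v.
Proof. by case: v => i [j|] //=; case: ifP => H //=; rewrite H. Qed.

Lemma fib_none i : #|fib p0 (i, None)| = nth 0 l i.
Proof.
have inj : injective (fun j : 'I_(sumn l) => ((i, Some j) : T0)) by move=> x y [].
rewrite -(card_ord_lt (nth_le_sumn l i)) -(card_imset _ inj).
apply: eq_card => v; rewrite !inE; case: v => i' [j|] /=.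
- case: ifP => jl; apply/idP/imsetP.
  + by move=> /andP [/eqP [<-] _]; exists j; rewrite ?inE.
  + by case=> j' /[!inE] jl' [-> ->]; rewrite eqxx /= xpair_eqE eqxx.
  + by rewrite xpair_eqE andbF.
  + by case=> j' /[!inE] jl' [ei ej]; move: jl; rewrite ei ej jl'.
- apply/idP/imsetP; first by case/andP => /eqP ->; rewrite eqxx.
  by case=> ? _ [].
Qed.

Lemma fib_some i j : #|fib p0 (i, Some j)| = 0.
Proof.
apply/eqP; rewrite cards_eq0; apply/eqP/setP => v; rewrite !inE.
case: v => i' [j'|] /=; last by rewrite xpair_eqE /= andbF.
case: ifP => _; first by rewrite xpair_eqE /= andbF.
by case: eqP.
Qed.

Lemma sum_fib (F : nat -> nat) : F 0 = 0 ->
  \sum_(c : T0) F #|fib p0 c| = sumn [seq F x | x <- l].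
Proof.
move=> F0.
transitivity (\sum_(i < size l) \sum_(o : option 'I_(sumn l)) F #|fib p0 (i, o)|).
  by rewrite pair_bigA; apply: eq_bigr => -[i o].
rewrite [sumn [seq _ | _ <- _]]sumnE big_map (big_nth 0) big_mkord; apply: eq_bigr => i _.
rewrite (bigD1 None) //= fib_none big1 ?addn0 // => -[j|] //= _.
by rewrite fib_some.
Qed.

Lemma list_feasible : feasible (sumn l) (sumn [seq 'C(x, 2) | x <- l]).
Proof.
have := forest_feasible p0_idem.
by rewrite (@sum_fib (fun n => n)) // (@sum_fib (fun n => 'C(n, 2))) // map_id.
Qed.
End ListForest.

Lemma bin2_sq n : 'C(n, 2) * 2 + n = n * n.
Proof. rewrite bin2_mul2; case: n => //= n; lia. Qed.

Lemma feasible_bounds N M : feasible N M -> 0 < N -> exists D,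
  [/\ D <= N, 'C(D, 2) <= M, M <= 'C(D, 2) + 'C(N - D, 2) + (N - D) & M <= N * D.-1].
Proof.
move=> [n [E [simp acyc cE lE]]] N0.
have tri := acyc_tri acyc.
have [e eE] : exists e, e \in E by apply/card_gt0P; rewrite cE.
have [x0 _] : exists x, x \in e by apply/card_gt0P; rewrite (simp _ eE).
case: (@arg_maxnP _ x0 predT (fun u => #|star E u|) isT) => v _ Hv.
exists #|star E v|; rewrite -cE -lE; split.
- by apply: subset_leq_card; apply/subsetP => f; rewrite inE => /andP [].
- exact: lge_lower.
- exact: lge_tri.
- by apply: lge_crude => // u; apply: Hv.
Qed.

Lemma nonfeas_arith N k D M : 100 <= N -> k * k <= N -> N < k.+1 * k.+1 -> D <= N ->
  'C(D, 2) <= M -> M <= 'C(D, 2) + 'C(N - D, 2) + (N - D) -> M <= N * D.-1 ->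
  M.+1 = 'C(N - k + 1, 2) -> False.
Proof.
move=> N100 kk kk1 DN l1 l2 l3 Me.
have k10 : 10 <= k.
  rewrite leqNgt; apply/negP => k9.
  have : k.+1 * k.+1 <= 10 * 10 by apply: leq_mul.
  lia.
have k10N : 10 * k <= N by apply: leq_trans kk; apply: leq_mul.
have [P NP] : exists P, N = P + k by exists (N - k); lia.
subst N.
have eP : P + k - k + 1 = P.+1 by lia.
rewrite eP binS bin1 in Me.
have hP := bin2_sq P.
have [DB|DB] := leqP P.+1 D.
  have := leq_bin2l 2 DB; rewrite binS bin1; lia.
have [Dk|Dk] := leqP D (k + 1).
  have : (P + k) * D.-1 <= (P + k) * k by apply: leq_mul => //; lia.
  have e1 : 9 * k * P <= P * P by apply: leq_mul => //; lia.
  have e2 : 9 * k * k <= P * k by apply: leq_mul => //; lia.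
  nia.
have [F DF] : exists F, D = k + 2 + F by exists (D - (k + 2)); lia.
have [G PG] : exists G, P = D + G by exists (P - D); lia.
subst P D.
have eG : k + 2 + F + G + k - (k + 2 + F) = G + k by lia.
rewrite eG in l2.
have hD := bin2_sq (k + 2 + F); have hG := bin2_sq (G + k).
have e3 : k * k + 3 * k + 2 < 2 * (k + 2 + F + G + k) by lia.
have X : 2 * M.+1 = (k + 2 + F + G) * (k + 2 + F + G) + (k + 2 + F + G) by lia.
have Y : 2 * M + (k + 2 + F) <= (k + 2 + F) * (k + 2 + F) + (G + k) * (G + k) + (G + k) by lia.
clear -X Y e3.
nia.
Qed.

Lemma tri_floor M : exists s, 'C(s, 2) <= M < 'C(s, 2) + s.
Proof.
elim: M => [|M [s /andP [h1 h2]]]; first by exists 1.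
have [lt|ge] := ltnP M.+1 ('C(s, 2) + s).
  by exists s; rewrite lt andbT; lia.
exists s.+1; rewrite binS bin1; apply/andP; split; lia.
Qed.

Lemma feasible_of N M s t q : 'C(s, 2) + 'C(t, 2) + q = M -> s + t + 2 * q <= N -> feasible N M.
Proof.
move=> HM HN.
have := list_feasible ([:: s; t] ++ nseq q 2 ++ nseq (N - (s + t + 2 * q)) 1).
rewrite !map_cat !sumn_cat !map_nseq !sumn_nseq /=.
have -> : s + (t + 0) + (2 * q + 1 * (N - (s + t + 2 * q))) = N by lia.
by rewrite -HM binn (@bin_small 1 2) // ?mul1n ?muln1 ?mul0n ?muln0 ?addn0.
Qed.

Lemma real_core (S T m n x : R) : (0 <= S)%R -> (0 <= T)%R -> (0 <= x)%R -> (x * x = n)%R -> (10 <= x)%R ->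
  (S * S <= m + m + S)%R -> (T * T < S + S + T)%R ->
  (m < n ^ 2 / 2 - 10 * n * x)%R -> (S + 3 * T <= n)%R.
Proof.
move=> S0 T0 x0 xx x10 hS hT hm.
have a0 : (0 <= n - 10 * x)%R by nra.
have Sb : (S < n - 10 * x + 2)%R.
  apply: Rnot_le_lt => H.
  have h1 : (0 <= (S - (n - 10 * x + 2)) * (S + (n - 10 * x + 2) - 1))%R by nra.
  nra.
have Tb : (T < 2 * x + 1)%R.
  apply: Rnot_le_lt => H.
  have h1 : (4 * x * x <= (T - 1) * (T - 1))%R by nra.
  nra.
lra.
Qed.

Lemma sqrt_facts (N : nat) : (0 <= sqrt (INR N))%R /\ (sqrt (INR N) * sqrt (INR N) = INR N)%R.
Proof. split; [exact: sqrt_pos | apply: sqrt_sqrt; exact: pos_INR]. Qed.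

Lemma feasible_small N M : 100 <= N ->
  (INR M < INR N ^ 2 / 2 - 10 * INR N * sqrt (INR N))%R -> feasible N M.
Proof.
move=> N100 hM.
have [s /andP [hs1 hs2]] := tri_floor M.
have [t /andP [ht1 ht2]] := tri_floor (M - 'C(s, 2)).
apply: (@feasible_of N M s t (M - 'C(s, 2) - 'C(t, 2))); first lia.
have bs := bin2_sq s; have bt := bin2_sq t.
have A1 : s * s <= M + M + s by lia.
have A2 : (t * t).+1 <= s + s + t by nia.
suff : s + t + t + t <= N by lia.
have [x0 xx] := sqrt_facts N.
have hN : (100 <= INR N)%R.
  by have := le_INR 100 N (elimT leP N100); rewrite [INR 100]INR_IZR_INZ.
have x10 : (10 <= sqrt (INR N))%R by nra.
have R1 := le_INR _ _ (elimT leP A1).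
have R2 := le_INR _ _ (elimT leP A2).
rewrite !plus_INR !mult_INR in R1.
rewrite S_INR !plus_INR !mult_INR in R2.
apply/leP; apply: INR_le; rewrite !plus_INR.
have := @real_core (INR s) (INR t) (INR M) (INR N) (sqrt (INR N)) (pos_INR _) (pos_INR _) x0 xx x10 R1 ltac:(lra) hM.
lra.
Qed.

Lemma upper_real (m p K n x : R) : (0 <= p)%R -> (0 <= x)%R -> (x * x = n)%R -> (10 <= x)%R ->
  (n = p + K)%R -> (n < (K + 1) * (K + 1))%R -> (0 <= K)%R ->
  (m * 2 + 2 = (p + 1) * p)%R -> (m <= n ^ 2 / 2 - 1 / 2 * n * x)%R.
Proof.
move=> p0 x0 xx x10 np nK K0 hm.
have xK : (x < K + 1)%R by nra.
have pb : (p < n - x + 1)%R by lra.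
have h : (p * p <= (n - x + 1) * (n - x + 1))%R by nra.
nra.
Qed.

Theorem mainTheorem5 :
  exists c0 c1 : R, (c0 >= c1)%R /\ (c1 > 0)%R /\
    exists N0 : nat, forall N : nat, N0 <= N ->
      (exists M : nat, non_feasible N M) /\
      (forall M : nat, non_feasible N M ->
         (forall M' : nat, M' < M -> ~ non_feasible N M') ->
         (INR N ^ 2 / 2 - c0 * INR N * sqrt (INR N) <= INR M)%R /\
         (INR M <= INR N ^ 2 / 2 - c1 * INR N * sqrt (INR N))%R).
Proof.
exists 10%R, (1 / 2)%R.
split; [lra|].
split; [lra|].
exists 100 => N N100.
destruct (Nat.sqrt_spec N (Nat.le_0_l N)) as [h1 h2].
set k := Nat.sqrt N in h1 h2.
have kk : k * k <= N by lia.
have kk1 : N < k.+1 * k.+1 by lia.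
have k10 : 10 <= k.
  rewrite leqNgt; apply/negP => k9.
  have : k.+1 * k.+1 <= 10 * 10 by apply: leq_mul.
  lia.
have k10N : 10 * k <= N by apply: leq_trans kk; apply: leq_mul.
have C1 : 1 <= 'C(N - k + 1, 2).
  have := @leq_bin2l 2 (N - k + 1) 2 ltac:(lia); by rewrite binn.
set Ms := 'C(N - k + 1, 2) - 1.
have nfMs : non_feasible N Ms.
  split.
  - have := @leq_bin2l (N - k + 1) N 2 ltac:(lia); rewrite /Ms; lia.
  - move=> /feasible_bounds [|D [DN l1 l2 l3]]; first lia.
    by apply: (nonfeas_arith N100 kk kk1 DN l1 l2 l3); rewrite /Ms; lia.
split; [by exists Ms|].
move=> M [Mle nfM] minM.
have MMs : M <= Ms.
  by rewrite leqNgt; apply/negP => lt; apply: (minM Ms lt nfMs).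
have [x0 xx] := sqrt_facts N.
have hN : (100 <= INR N)%R.
  by have := le_INR 100 N (elimT leP N100); rewrite [INR 100]INR_IZR_INZ.
have x10 : (10 <= sqrt (INR N))%R by nra.
split.
  { apply: Rnot_lt_le => H; apply: nfM; exact: feasible_small. }
apply: Rle_trans (le_INR _ _ (elimT leP MMs)) _.
have [P NP] : exists P, N = P + k by exists (N - k); lia.
have bs := bin2_sq (N - k + 1).
have e : Ms * 2 + 2 = (P + 1) * P by rewrite /Ms; nia.
have Re := f_equal INR e.
rewrite !plus_INR !mult_INR in Re.
have RN : INR N = (INR P + INR k)%R by rewrite NP plus_INR.
have Rk : (INR N < (INR k + 1) * (INR k + 1))%R.
  have := lt_INR _ _ (elimT ltP kk1); by rewrite mult_INR S_INR.
apply: (@upper_real (INR Ms) (INR P) (INR k) (INR N) (sqrt (INR N)) (pos_INR P) x0 xx x10 RN Rk (pos_INR k)).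
by move: Re; rewrite plus_INR [INR 2]/= [INR 1]/=; lra.
Qed.
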